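(* Consider Algorithm FoBa-obj with parameter $\delta>0$, and let $\beta^{(k)}$ with support $F^{(k)}$ be the iterate at the beginning of some iteration with $k\ge1$ (not necessarily the output). Then for any $\bar\beta\in\mathbb{R}^d$ with support $\bar F$, $$\|\beta^{(k)}_{F^{(k)}-\bar F}\|^2=\|(\beta^{(k)}-\bar\beta)_{F^{(k)}-\bar F}\|^2\ge\frac{\delta^{(k)}}{\rho_+(1)}|F^{(k)}-\bar F|\ge\frac{\delta}{\rho_+(1)}|F^{(k)}-\bar F|.$$
   Context: Let $Q:\mathbb{R}^d\to\mathbb{R}$ be convex and continuously differentiable. $e_j$ is the $j$-th standard basis vector, $\mathrm{supp}(\beta)=\{j:\beta_j\ne0\}$, $\|\beta\|_0=|\mathrm{supp}(\beta)|$, $\|\cdot\|$ is the Euclidean norm, $A-B$ is set difference, and $v_S$ is $v$ restricted to the coordinates in $S$. For $F\subseteq\{1,\dots,d\}$, $\hat\beta(F)$ denotes a minimizer of $Q$ over $\{\beta:\mathrm{supp}(\beta)\subseteq F\}$ (assumed to exist). For a positive integer $s$, the restricted strong convexity constants $\rho_-(s),\rho_+(s)>0$ are constants such that for all $\beta,\beta'\in\mathbb{R}^d$ with $\|\beta'-\beta\|_0\le s$: $\frac{\rho_-(s)}{2}\|\beta'-\beta\|^2\le Q(\beta')-Q(\beta)-\langle\nabla Q(\beta),\beta'-\beta\rangle\le\frac{\rho_+(s)}{2}\|\beta'-\beta\|^2.$ Algorithm FoBa has two variants: FoBa-obj (parameter $\delta>0$) and FoBa-gdt (parameter $\epsilon>0$).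 Initialize $F^{(0)}=\emptyset$, $\beta^{(0)}=0$, $k=0$, and repeat the following iteration. (1) Stopping test: FoBa-obj stops if $Q(\beta^{(k)})-\min_{\alpha\in\mathbb{R},\,j\notin F^{(k)}}Q(\beta^{(k)}+\alpha e_j)<\delta$; FoBa-gdt stops if $\|\nabla Q(\beta^{(k)})\|_\infty<\epsilon$. On stopping the output is $\beta^{(k)}$ with support $F^{(k)}$, and the algorithm is said to terminate at $k$. (2) Forward step: FoBa-obj picks $i^{(k)}\in\arg\min_{i\notin F^{(k)}}\min_\alpha Q(\beta^{(k)}+\alpha e_i)$; FoBa-gdt picks $i^{(k)}\in\arg\max_{i\notin F^{(k)}}|\nabla Q(\beta^{(k)})_i|$. Set $F^{(k+1)}=F^{(k)}\cup\{i^{(k)}\}$, $\beta^{(k+1)}=\hat\beta(F^{(k+1)})$, $\delta^{(k+1)}=Q(\beta^{(k)})-Q(\beta^{(k+1)})$, $k\leftarrow k+1$. (3) Backward step: repeat — if $F^{(k)}=\emptyset$ or $\min_{i\in F^{(k)}}Q(\beta^{(k)}-\beta^{(k)}_ie_i)-Q(\beta^{(k)})\ge\delta^{(k)}/2$, leave the backward step; otherwise pick $j\in\arg\min_{i\in F^{(k)}}Q(\beta^{(k)}-\beta^{(k)}_ie_i)$, set $F^{(k-1)}=F^{(k)}-\{j\}$, $\beta^{(k-1)}=\hat\beta(F^{(k-1)})$, $k\leftarrow k-1$ (where $\delta^{(k-1)}$ is the value recorded at the most recent forward step producing index $k-1$). Thus $|F^{(k)}|=k$ always. ''At the beginning of an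 iteration'' means the state just before a stopping test. *)

(* Defs.v *)
(* real analysis on R^d, modelled as nat -> R with only the
   coordinates 0..d-1 relevant (vectors of R^d are those vanishing at j >= d). *)
From Stdlib Require Import Reals Lra Lia Arith List Bool.
Import ListNotations.
Open Scope R_scope.
Open Scope bool_scope.

Definition vec := nat -> R.

Definition in_space (d : nat) (v : vec) : Prop := forall j, (d <= j)%nat -> v j = 0.

Definition vadd (u v : vec) : vec := fun j => u j + v j.
Definition vsub (u v : vec) : vec := fun j => u j - v j.
Definition vscale (a : R) (v : vec) : vec := fun j => a * v j.
Definition unitv (i : nat) : vec := fun j => if Nat.eqb j i then 1 else 0.

Definition sumd (d : nat) (f : nat -> R) : R := fold_right Rplus 0 (map f (seq 0 d)).
Definition inner (d : nat) (u v : vec) : R := sumd d (fun j => u j * v j).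
Definition vnorm (d : nat) (v : vec) : R := sqrt (inner d v v).

(* finite subsets of {0,..,d-1} as boolean predicates *)
Definition supp (d : nat) (v : vec) : nat -> bool :=
  fun j => Nat.ltb j d && (if Req_EM_T (v j) 0 then false else true).
Definition card (d : nat) (A : nat -> bool) : nat := length (filter A (seq 0 d)).
Definition setdiff (A B : nat -> bool) : nat -> bool := fun j => A j && negb (B j).
Definition l0 (d : nat) (v : vec) : nat := card d (supp d v).
Definition restrict (S : nat -> bool) (v : vec) : vec := fun j => if S j then v j else 0.

Definition convex_on (d : nat) (Q : vec -> R) : Prop :=
  forall b b' t, in_space d b -> in_space d b' -> 0 <= t <= 1 ->
    Q (vadd (vscale t b) (vscale (1 - t) b')) <= t * Q b + (1 - t) * Q b'.

Definition has_gradient (d : nat) (Q : vec -> R) (grad : vec -> vec) : Prop :=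
  forall b, in_space d b -> forall eps, 0 < eps -> exists del, 0 < del /\
    forall h, in_space d h -> vnorm d h < del ->
      Rabs (Q (vadd b h) - Q b - inner d (grad b) h) <= eps * vnorm d h.

Definition grad_continuous (d : nat) (grad : vec -> vec) : Prop :=
  forall b, in_space d b -> forall eps, 0 < eps -> exists del, 0 < del /\
    forall b', in_space d b' -> vnorm d (vsub b' b) < del ->
      vnorm d (vsub (grad b') (grad b)) < eps.

Definition RSC (d : nat) (Q : vec -> R) (grad : vec -> vec) (s : nat) (rm rp : R) : Prop :=
  0 < rm /\ 0 < rp /\
  forall b b', in_space d b -> in_space d b' -> (l0 d (vsub b' b) <= s)%nat ->
    rm / 2 * (vnorm d (vsub b' b)) ^ 2 <= Q b' - Q b - inner d (grad b) (vsub b' b) /\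
    Q b' - Q b - inner d (grad b) (vsub b' b) <= rp / 2 * (vnorm d (vsub b' b)) ^ 2.

Definition is_restricted_min (d : nat) (Q : vec -> R) (F : nat -> bool) (b : vec) : Prop :=
  in_space d b /\ (forall j, F j = false -> b j = 0) /\
  forall b', in_space d b' -> (forall j, F j = false -> b' j = 0) -> Q b <= Q b'.

Record state := mkState {
  st_k : nat;
  st_F : nat -> bool;
  st_beta : vec;
  st_delta : nat -> R
}.

Definition init_state : state := mkState 0 (fun _ => false) (fun _ => 0) (fun _ => 0).

(* Stopping test fails and forward step is performed: i attains
   min_{alpha, j notin F} Q(beta + alpha e_j) =: mi, and Q(beta) - mi >= delta. *)
Definition forward_obj (d : nat) (Q : vec -> R) (delta : R) (s s' : state) : Prop :=
  exists i a,
    (i < d)%nat /\ st_F s i = false /\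
    (forall j a', (j < d)%nat -> st_F s j = false ->
        Q (vadd (st_beta s) (vscale a (unitv i))) <= Q (vadd (st_beta s) (vscale a' (unitv j)))) /\
    ~ (Q (st_beta s) - Q (vadd (st_beta s) (vscale a (unitv i))) < delta) /\
    st_k s' = S (st_k s) /\
    (forall j, st_F s' j = st_F s j || Nat.eqb j i) /\
    is_restricted_min d Q (st_F s') (st_beta s') /\
    (forall m, st_delta s' m =
        if Nat.eqb m (S (st_k s)) then Q (st_beta s) - Q (st_beta s') else st_delta s m).

Definition backward_exit (Q : vec -> R) (s : state) : Prop :=
  (forall j, st_F s j = false) \/
  (forall i, st_F s i = true ->
     Q (vadd (st_beta s) (vscale (- st_beta s i) (unitv i))) - Q (st_beta s)
       >= st_delta s (st_k s) / 2).

Definition backward_remove (d : nat) (Q : vec -> R) (s s' : state) : Prop :=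
  exists j,
    st_F s j = true /\
    (forall i, st_F s i = true ->
       Q (vadd (st_beta s) (vscale (- st_beta s j) (unitv j)))
         <= Q (vadd (st_beta s) (vscale (- st_beta s i) (unitv i)))) /\
    Q (vadd (st_beta s) (vscale (- st_beta s j) (unitv j))) - Q (st_beta s)
       < st_delta s (st_k s) / 2 /\
    st_k s = S (st_k s') /\
    (forall i, st_F s' i = st_F s i && negb (Nat.eqb i j)) /\
    is_restricted_min d Q (st_F s') (st_beta s') /\
    (forall m, st_delta s' m = st_delta s m).

(* foba_reach d Q delta true s  : s is a state at the beginning of an iteration;
   foba_reach d Q delta false s : s is a state inside a backward step. *)
Inductive foba_reach (d : nat) (Q : vec -> R) (delta : R) : bool -> state -> Prop :=
| fr_init : foba_reach d Q delta true init_state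
| fr_fwd : forall s s', foba_reach d Q delta true s -> forward_obj d Q delta s s' ->
    foba_reach d Q delta false s'
| fr_bwd : forall s s', foba_reach d Q delta false s -> backward_remove d Q s s' ->
    foba_reach d Q delta false s'
| fr_exit : forall s, foba_reach d Q delta false s -> backward_exit Q s ->
    foba_reach d Q delta true s.

(* Main.v *)
Require Import Defs.
From Stdlib Require Import Reals Lra Lia Arith List Bool.
Open Scope R_scope.

Lemma fsum_ext (f g : nat -> R) (l : list nat) :
  (forall j, In j l -> f j = g j) ->
  fold_right Rplus 0 (map f l) = fold_right Rplus 0 (map g l).
Proof.
  induction l as [|a l IH]; intros H; simpl; auto.
  rewrite (H a) by (left; auto). rewrite IH; auto. intros j Hj; apply H; right; auto.
Qed.

Lemma fsum_le (f g : nat -> R) (l : list nat) :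
  (forall j, In j l -> f j <= g j) ->
  fold_right Rplus 0 (map f l) <= fold_right Rplus 0 (map g l).
Proof.
  induction l as [|a l IH]; intros H; simpl; [lra|].
  assert (f a <= g a) by (apply H; left; auto).
  assert (fold_right Rplus 0 (map f l) <= fold_right Rplus 0 (map g l))
    by (apply IH; intros j Hj; apply H; right; auto). lra.
Qed.

Lemma fsum_const (A : nat -> bool) (c : R) (l : list nat) :
  fold_right Rplus 0 (map (fun j => if A j then c else 0) l) = c * INR (length (filter A l)).
Proof.
  induction l as [|a l IH]; simpl; [ring|].
  destruct (A a); cbn [filter length map fold_right]; rewrite IH; [rewrite S_INR; ring|ring].
Qed.

Lemma fsum_single (f : nat -> R) (i n a : nat) :
  (forall j, j <> i -> f j = 0) ->
  fold_right Rplus 0 (map f (seq a n)) = if (andb (Nat.leb a i) (Nat.ltb i (a + n))) then f i else 0.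
Proof.
  intros Hf. revert a. induction n as [|n IH]; intros a; simpl.
  - destruct (Nat.leb a i) eqn:E1; destruct (Nat.ltb i (a+0)) eqn:E2; simpl; auto.
    apply Nat.leb_le in E1; apply Nat.ltb_lt in E2; lia.
  - rewrite IH.
    destruct (Nat.eq_dec a i) as [->|Hne].
    + replace (Nat.leb (S i) i) with false by (symmetry; apply Nat.leb_gt; lia).
      replace (Nat.leb i i) with true by (symmetry; apply Nat.leb_le; lia).
      replace (Nat.ltb i (i + S n)) with true by (symmetry; apply Nat.ltb_lt; lia).
      simpl; ring.
    + rewrite (Hf a Hne), Rplus_0_l.
      destruct (Nat.leb (S a) i) eqn:E1; destruct (Nat.leb a i) eqn:E3.
      * apply Nat.leb_le in E1. simpl.
        replace (a + S n)%nat with (S a + n)%nat by lia. reflexivity.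
      * apply Nat.leb_le in E1; apply Nat.leb_gt in E3; lia.
      * apply Nat.leb_gt in E1; apply Nat.leb_le in E3; lia.
      * simpl; auto.
Qed.

Lemma sumd_single (d : nat) (f : nat -> R) (i : nat) :
  (i < d)%nat -> (forall j, j <> i -> f j = 0) -> sumd d f = f i.
Proof.
  intros Hi Hf. unfold sumd. rewrite (fsum_single f i d 0 Hf).
  replace (Nat.leb 0 i) with true by (symmetry; apply Nat.leb_le; lia).
  replace (Nat.ltb i (0 + d)) with true by (symmetry; apply Nat.ltb_lt; lia). auto.
Qed.

Lemma filter_none (A : nat -> bool) (l : list nat) :
  (forall j, In j l -> A j = false) -> filter A l = nil.
Proof.
  induction l as [|a l IH]; intros H; simpl; auto.
  rewrite (H a) by (left; auto). apply IH. intros; apply H; right; auto.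
Qed.

Lemma card_single (d : nat) (A : nat -> bool) (i : nat) :
  (forall j, A j = true -> j = i) -> (card d A <= 1)%nat.
Proof.
  intros H. unfold card. cut (forall a, (length (filter A (seq a d)) <= 1)%nat); [auto|].
  induction d as [|n IH]; intros a; simpl; [lia|].
  destruct (A a) eqn:E.
  - apply H in E; subst. simpl. rewrite filter_none; [simpl; lia|].
    intros j Hj. apply in_seq in Hj. destruct (A j) eqn:E'; auto. apply H in E'; lia.
  - apply IH.
Qed.

Lemma sumd_nonneg_sq (d : nat) (v : vec) : 0 <= inner d v v.
Proof.
  unfold inner, sumd. induction (seq 0 d) as [|a l IH]; simpl; [lra|].
  pose proof (Rle_0_sqr (v a)). unfold Rsqr in H. lra.
Qed.

Lemma vnorm_sq (d : nat) (v : vec) : vnorm d v ^ 2 = inner d v v.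
Proof.
  unfold vnorm. pose proof (Rsqr_sqrt _ (sumd_nonneg_sq d v)). unfold Rsqr in H.
  simpl. rewrite Rmult_1_r. exact H.
Qed.

Lemma single_facts (d : nat) (g h : vec) (i : nat) :
  (i < d)%nat -> (forall j, j <> i -> h j = 0) ->
  inner d g h = g i * h i /\ vnorm d h ^ 2 = h i * h i /\ (l0 d h <= 1)%nat.
Proof.
  intros Hi Hh. split; [|split].
  - unfold inner. apply (sumd_single d (fun j => g j * h j)); auto. intros j Hj; rewrite Hh; auto; ring.
  - rewrite vnorm_sq. unfold inner. apply (sumd_single d (fun j => h j * h j)); auto. intros j Hj; rewrite Hh; auto; ring.
  - unfold l0. apply card_single with i. intros j Hj. unfold supp in Hj.
    destruct (Nat.eq_dec j i); auto. rewrite (Hh j n) in Hj.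
    destruct (Req_EM_T 0 0); [|congruence]. rewrite andb_false_r in Hj. discriminate.
Qed.

Definition shift (b : vec) (t : R) (i : nat) : vec := vadd b (vscale t (unitv i)).

Lemma shift_diff (b : vec) t i : forall j, j <> i -> vsub (shift b t i) b j = 0.
Proof.
  intros j Hj. unfold vsub, shift, vadd, vscale, unitv.
  replace (Nat.eqb j i) with false by (symmetry; apply Nat.eqb_neq; auto). ring.
Qed.

Lemma shift_diff_i (b : vec) t i : vsub (shift b t i) b i = t.
Proof. unfold vsub, shift, vadd, vscale, unitv. rewrite Nat.eqb_refl. ring. Qed.

Lemma shift_space d b t i : in_space d b -> (i < d)%nat -> in_space d (shift b t i).
Proof.
  intros Hb Hi j Hj. unfold shift, vadd, vscale, unitv. rewrite Hb by auto.
  replace (Nat.eqb j i) with false by (symmetry; apply Nat.eqb_neq; lia). ring.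
Qed.

Lemma rsc_upper d Q grad rm rp b t i :
  RSC d Q grad 1 rm rp -> in_space d b -> (i < d)%nat ->
  Q (shift b t i) - Q b - grad b i * t <= rp / 2 * (t * t).
Proof.
  intros [_ [_ H]] Hb Hi.
  destruct (single_facts d (grad b) (vsub (shift b t i) b) i Hi (shift_diff b t i))
    as [E1 [E2 E3]].
  rewrite shift_diff_i in E1, E2.
  destruct (H b (shift b t i) Hb (shift_space d b t i Hb Hi) E3) as [_ H2].
  rewrite E1, E2 in H2. exact H2.
Qed.

Lemma grad_zero d Q grad rm rp F b i :
  RSC d Q grad 1 rm rp -> is_restricted_min d Q F b -> (i < d)%nat -> F i = true ->
  grad b i = 0.
Proof.
  intros Hr [Hb [Hs Hm]] Hi HF.
  pose proof Hr as [_ [Hrp _]].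
  set (g := grad b i).
  set (t := - g / rp).
  assert (Ht : Q b <= Q (shift b t i)).
  { apply Hm. apply shift_space; auto.
    intros j Hj. unfold shift, vadd, vscale, unitv. rewrite Hs by auto.
    destruct (Nat.eqb j i) eqn:E; [apply Nat.eqb_eq in E; subst; congruence|ring]. }
  pose proof (rsc_upper d Q grad rm rp b t i Hr Hb Hi).
  fold g in H.
  assert (Htr : t * rp = - g) by (unfold t; field; lra).
  assert (0 <= t * g + rp / 2 * (t * t)) by lra.
  assert (t * g + rp / 2 * (t * t) = t * g / 2).
  { replace (rp / 2 * (t * t)) with (t * (t * rp) / 2) by (field; lra). rewrite Htr. field. }
  assert (t * g = - (g * g) / rp) by (unfold t; field; lra).
  assert (0 <= - (g * g) / rp) by lra.
  assert (0 <= - (g * g)).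
  { replace (- (g*g)) with ((- (g*g)) / rp * rp) by (field; lra).
    apply Rmult_le_pos; lra. }
  nra.
Qed.

Definition inv d Q delta (s : state) : Prop :=
  in_space d (st_beta s) /\ (forall j, st_F s j = false -> st_beta s j = 0) /\
  (forall m, (1 <= m <= st_k s)%nat -> st_delta s m >= delta) /\
  ((1 <= st_k s)%nat -> is_restricted_min d Q (st_F s) (st_beta s)).

Lemma reach_inv d Q delta b s : foba_reach d Q delta b s -> inv d Q delta s.
Proof.
  induction 1 as [| s s' _ IH Hf | s s' _ IH Hb | s _ IH _].
  - unfold inv; simpl. repeat split; intros; auto; lia.
  - destruct IH as [Hsp [Hsu [Hd _]]].
    destruct Hf as [i [a [Hi [HFi [_ [Hnot [Hk [HF [Hmin Hdel]]]]]]]]].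
    pose proof Hmin as [Hb' [Hs' Hm']].
    unfold inv. split; [auto|split; [auto|split; [|intros; auto]]].
    intros m Hm. rewrite Hdel. rewrite Hk in Hm.
    destruct (Nat.eqb m (S (st_k s))) eqn:E.
    + assert (Q (st_beta s') <= Q (shift (st_beta s) a i)).
      { apply Hm'. apply shift_space; auto.
        intros j Hj. rewrite HF in Hj. apply orb_false_iff in Hj as [Hj1 Hj2].
        unfold shift, vadd, vscale, unitv. rewrite Hsu, Hj2 by auto. ring. }
      unfold shift in H. lra.
    + apply Nat.eqb_neq in E. apply Hd. lia.
  - destruct IH as [_ [_ [Hd _]]].
    destruct Hb as [j [_ [_ [_ [Hk [_ [Hmin Hdel]]]]]]].
    pose proof Hmin as [Hb' [Hs' Hm']].
    unfold inv. split; [auto|split; [auto|split; [|intros; auto]]].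
    intros m Hm. rewrite Hdel. apply Hd. lia.
  - exact IH.
Qed.

Theorem mainTheorem8 (d : nat) (Q : vec -> R) (grad : vec -> vec) (rm1 rp1 delta : R)
  (Hconv : convex_on d Q) (Hgrad : has_gradient d Q grad) (Hcont : grad_continuous d grad)
  (Hrsc : RSC d Q grad 1 rm1 rp1)
  (Hmin_exists : forall F : nat -> bool, exists b, is_restricted_min d Q F b)
  (Hdelta : 0 < delta)
  (s : state) (Hs : foba_reach d Q delta true s) (Hk : (1 <= st_k s)%nat)
  (bbar : vec) (Hbbar : in_space d bbar) :
  let Fk := st_F s in
  let bk := st_beta s in
  let D := setdiff Fk (supp d bbar) in
  (vnorm d (restrict D bk)) ^ 2 = (vnorm d (restrict D (vsub bk bbar))) ^ 2 /\
  (vnorm d (restrict D (vsub bk bbar))) ^ 2 >= st_delta s (st_k s) / rp1 * INR (card d D) /\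
  st_delta s (st_k s) / rp1 * INR (card d D) >= delta / rp1 * INR (card d D).
Proof.
  intros Fk bk D.
  pose proof Hrsc as [_ [Hrp _]].
  destruct (reach_inv d Q delta true s Hs) as [Hsp [Hsu [Hd Hmin]]].
  specialize (Hmin Hk). specialize (Hd (st_k s) ltac:(lia)).
  assert (Heq : vnorm d (restrict D bk) ^ 2 = vnorm d (restrict D (vsub bk bbar)) ^ 2).
  { rewrite !vnorm_sq. unfold inner, sumd. apply fsum_ext. intros j Hj.
    apply in_seq in Hj. unfold restrict, vsub. destruct (D j) eqn:E; [|ring].
    unfold D, setdiff, supp in E. apply andb_true_iff in E as [_ E].
    apply negb_true_iff in E.
    replace (Nat.ltb j d) with true in E by (symmetry; apply Nat.ltb_lt; lia).
    simpl in E. destruct (Req_EM_T (bbar j) 0) as [->|]; [ring|discriminate]. }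
  assert (Hc : 0 <= INR (card d D)) by apply pos_INR.
  split; [exact Heq|split].
  - rewrite <- Heq, vnorm_sq. unfold inner, sumd, card.
    rewrite <- fsum_const. apply Rle_ge. apply fsum_le. intros j Hj. apply in_seq in Hj.
    unfold restrict. destruct (D j) eqn:E; [|lra].
    unfold D, setdiff in E. apply andb_true_iff in E as [E _].
    inversion Hs; subst.
    + simpl in Hk. lia.
    + destruct H0 as [Hall | Hex].
      * unfold Fk in E. rewrite Hall in E. discriminate.
      * specialize (Hex j E).
        pose proof (rsc_upper d Q grad rm1 rp1 bk (- bk j) j Hrsc Hsp ltac:(lia)).
        rewrite (grad_zero d Q grad rm1 rp1 Fk bk j Hrsc Hmin ltac:(lia) E) in H0.
        unfold shift in H0. fold bk in Hex.
        apply Rmult_le_reg_r with rp1; [lra|].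
        replace (st_delta s (st_k s) / rp1 * rp1) with (st_delta s (st_k s)) by (field; lra).
        nra.
  - apply Rle_ge. apply Rmult_le_compat_r; [lra|].
    unfold Rdiv. apply Rmult_le_compat_r; [left; apply Rinv_0_lt_compat; lra|lra].
Qed.
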